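(* Let $K$ be a finite set with $|K|\ge2$ and $X=2^K$, and let $f^{\mathcal{W}}:\mathcal{P}^n\to 2^K$ be a non-dictatorial voting by committees with committees $\mathcal{W}=\{\mathcal{W}_k\}_{k\in K}$. Then $f^{\mathcal{W}}$ is NOM if and only if for each $k\in K$: (i) $\bigcap_{M\in\mathcal{W}_k}M=\emptyset$, and (ii) $|M|\ge2$ for each $M\in\mathcal{W}_k$.
   Context: $N=\{1,\dots,n\}$, $n\ge2$. Alternatives are subsets of $K$; $\mathcal{P}$ is the set of all strict linear orders on $2^K$ (not necessarily separable); $t(P_i)\subseteq K$ is the top of $P_i$. A committee for $k$ is a non-empty set $\mathcal{W}_k$ of non-empty subsets of $N$ such that $M\in\mathcal{W}_k$ and $M\subseteq M'$ imply $M'\in\mathcal{W}_k$. The voting by committees $f^{\mathcal{W}}$ is defined by: $k\in f^{\mathcal{W}}(P)$ iff $\{i\in N:k\in t(P_i)\}\in\mathcal{W}_k$. A rule is dictatorial if there is $i$ with $f(P)=t(P_i)$ for all $P$. Option set $O(P_i)=\{f(P_i,P_{-i}):P_{-i}\in\mathcal{P}^{n-1}\}$. $P_i'$ is a manipulation at $P_i$ if $f(P_i',P_{-i})P_if(P_i,P_{-i})$ for some $P_{-i}$; it is obvious if the $P_i$-worst element of $O(P_i')$ is strictly $P_i$-better than that of $O(P_i)$, or the $P_i$-best element of $O(P_i')$ is strictly $P_i$-better than that of $O(P_i)$. NOM means no obvious manipulation exists. *)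

(* Defs.v *)
From mathcomp Require Import all_boot.
Set Implicit Arguments. Unset Strict Implicit. Unset Printing Implicit Defensive.

Section Voting.
Variable K : finType.
Variable n : nat.

Definition strict_linear_order (R : rel {set K}) : Prop :=
  irreflexive R /\ transitive R /\ (forall x y, x != y -> R x y || R y x).

Definition pref := {R : rel {set K} | strict_linear_order R}.
Definition prefR (P : pref) : rel {set K} := proj1_sig P.

(* top of P: the P-best alternative (unique, exists as {set K} is finite, nonempty) *)
Definition top (P : pref) : {set K} :=
  odflt set0 [pick x | [forall y, (y != x) ==> prefR P x y]].

Definition profile := 'I_n -> pref.

Definition upd (P : profile) (i : 'I_n) (Q : pref) : profile :=
  fun j => if j == i then Q else P j.

Definition committee (Wk : {set {set 'I_n}}) : Prop :=
  Wk != set0 /\ set0 \notin Wk /\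
  (forall M M' : {set 'I_n}, M \in Wk -> M \subset M' -> M' \in Wk).

Definition committees (W : K -> {set {set 'I_n}}) : Prop :=
  forall k, committee (W k).

Definition vbc (W : K -> {set {set 'I_n}}) (P : profile) : {set K} :=
  [set k | [set i | k \in top (P i)] \in W k].

Definition dictatorial (f : profile -> {set K}) : Prop :=
  exists i, forall P : profile, f P = top (P i).

Definition option_set (f : profile -> {set K}) (i : 'I_n) (Pi : pref)
  (x : {set K}) : Prop :=
  exists P : profile, f (upd P i Pi) = x.

Definition is_worst (R : rel {set K}) (S : {set K} -> Prop) (x : {set K}) :=
  S x /\ forall y, S y -> y != x -> R y x.
Definition is_best (R : rel {set K}) (S : {set K} -> Prop) (x : {set K}) :=
  S x /\ forall y, S y -> y != x -> R x y.

Definition manipulation (f : profile -> {set K}) (i : 'I_n) (Pi Pi' : pref) :=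
  exists P : profile, prefR Pi (f (upd P i Pi')) (f (upd P i Pi)).

Definition obvious_manipulation (f : profile -> {set K}) (i : 'I_n)
  (Pi Pi' : pref) :=
  manipulation f i Pi Pi' /\
  ((exists w w', is_worst (prefR Pi) (option_set f i Pi) w /\
                 is_worst (prefR Pi) (option_set f i Pi') w' /\
                 prefR Pi w' w) \/
   (exists b b', is_best (prefR Pi) (option_set f i Pi) b /\
                 is_best (prefR Pi) (option_set f i Pi') b' /\
                 prefR Pi b' b)).

Definition NOM (f : profile -> {set K}) : Prop :=
  forall i Pi Pi', ~ obvious_manipulation f i Pi Pi'.

End Voting.

(* Main.v *)
Require Import Defs.
From mathcomp Require Import all_boot.
Set Implicit Arguments. Unset Strict Implicit. Unset Printing Implicit Defensive.
From Stdlib Require Import Classical.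
From mathcomp Require Import zify.

Section S.
Variable K : finType.
Variable n : nat.

Definition score (x y z : {set K}) : nat :=
  if z == x then 0 else if z == y then #|{set K}|.+1 else (enum_rank z).+1.

Lemma score_lt x y z : z != y -> score x y z <= #|{set K}|.
Proof.
move=> zy; rewrite /score; case: eqP => // _; rewrite (negbTE zy).
exact: ltn_ord.
Qed.

Lemma score_inj x y : injective (score x y).
Proof.
move=> a b; rewrite /score.
have ha : (enum_rank a < #|{set K}|)%N := ltn_ord _.
have hb : (enum_rank b < #|{set K}|)%N := ltn_ord _.
case: (a =P x) => [ax|ax]; case: (b =P x) => [bx|bx];
case: (a =P y) => [ay|ay]; case: (b =P y) => [by_|by_]; subst => //; try lia.
move=> [] /ord_inj /enum_rank_inj; done.
Qed.


Lemma slo_score x y : strict_linear_order (fun a b => score x y a < score x y b).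
Proof.
split; first by move=> a; rewrite ltnn.
split; first by move=> a b c; apply: ltn_trans.
move=> a b ab; case: (ltngtP (score x y a) (score x y b)) => //.
by move/score_inj => e; rewrite e eqxx in ab.
Qed.

Definition mkpref x y : pref K := exist _ _ (slo_score x y).

Lemma top_eq (P : pref K) x : (forall y, y != x -> prefR P x y) -> top P = x.
Proof.
move=> H; rewrite /top; case: pickP => [z /forallP Hz|Hn] /=.
  apply/eqP; apply/negP => /negP zx.
  have h1 := H _ zx; have h2 := implyP (Hz x); rewrite eq_sym in zx.
  have h3 := h2 zx.
  case: (proj2_sig P) => irr [tr _].
  by have := tr _ _ _ h3 h1; rewrite /prefR irr.
have := Hn x; rewrite /=; move/negP; case; apply/forallP => y; apply/implyP; exact: H.
Qed.

Lemma top_mk x y : top (mkpref x y) = x.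
Proof.
apply: top_eq => z zx; rewrite /prefR /= /score eqxx (negbTE zx).
by case: ifP.
Qed.

Lemma bot_mk x y z : z != y -> x != y -> prefR (mkpref x y) z y.
Proof.
move=> zy xy; rewrite /prefR /=.
have := score_lt x zy; rewrite /score.
rewrite eq_sym in xy; rewrite (negbTE xy) eqxx.
by case: (z =P x) => _ //; case: ifP.
Qed.

Lemma top_upd (P : profile K n) i Q j :
  top (upd P i Q j) = if j == i then top Q else top (P j).
Proof. by rewrite /upd; case: (j == i). Qed.

Lemma exists_worst (P : pref K) (S : {set K} -> Prop) x0 :
  S x0 -> exists w, is_worst (prefR P) S w.
Proof.
case: (proj2_sig P) => irr [tr tot] Sx0.
suff H : forall l : seq {set K}, (exists x, x \in l /\ S x) ->
  exists w, S w /\ forall y, y \in l -> S y -> y != w -> prefR P y w.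
  have [|w [Sw Hw]] := H (enum (predT : pred {set K})); first by exists x0; rewrite mem_enum.
  by exists w; split => // y Sy; apply: Hw => //; rewrite mem_enum.
elim=> [|a l IH] [x [xl Sx]] //.
case: (classic (exists x, x \in l /\ S x)) => [/IH [w [Sw Hw]]|Hn].
  case: (classic (S a /\ a != w)) => [[Sa aw]|Hna].
    have := tot _ _ aw; case/orP => [Raw|Rwa].
      exists w; split => // y; rewrite inE; case/orP => [/eqP -> //|yl Sy yw].
      exact: Hw.
    exists a; split => // y; rewrite inE; case/orP => [/eqP -> //|yl Sy ya].
      by rewrite eqxx.
    case: (y =P w) => [-> //|/eqP yw].
    exact: tr (Hw _ yl Sy yw) Rwa.
  exists w; split => // y; rewrite inE; case/orP => [/eqP ->|yl Sy yw].
    by move=> Sa aw; case: Hna.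
  exact: Hw.
have Sa : S a.
  move: xl; rewrite inE; case/orP => [/eqP <- //|xl].
  by case: Hn; exists x.
exists a; split => // y; rewrite inE; case/orP => [/eqP -> //|yl Sy ya].
  by rewrite eqxx.
by case: Hn; exists y.
Qed.

Lemma committee_setT (Wk : {set {set 'I_n}}) : committee Wk -> setT \in Wk.
Proof.
case=> /set0Pn [M MW] [_ up]; exact: up _ _ MW (subsetT _).
Qed.

Lemma memb (W : K -> {set {set 'I_n}}) (i : 'I_n) (t w : {set K}) : committees W ->
  (forall l, (l \in w -> l \notin t -> [set~ i] \in W l) /\
             (l \notin w -> l \in t -> [set i] \notin W l)) ->
  vbc W (upd (fun _ => mkpref w w) i (mkpref t w)) = w.
Proof.
move=> cW H; apply/setP => l; rewrite inE.
have [H1 H2] := H l.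
case: (cW l) => _ [n0 up].
case Hw: (l \in w); case Ht: (l \in t).
- suff -> : [set j | l \in top (upd (fun _ => mkpref w w) i (mkpref t w) j)] = setT.
    exact: committee_setT.
  by apply/setP => h; rewrite !inE top_upd !top_mk; case: ifP.
- suff -> : [set j | l \in top (upd (fun _ => mkpref w w) i (mkpref t w) j)] = [set~ i].
    by apply: H1; rewrite ?Ht.
  by apply/setP => h; rewrite !inE top_upd !top_mk; case: ifP.
- suff -> : [set j | l \in top (upd (fun _ => mkpref w w) i (mkpref t w) j)] = [set i].
    by apply/negbTE; apply: H2; rewrite ?Hw.
  by apply/setP => h; rewrite !inE top_upd !top_mk; case: ifP.
- suff -> : [set j | l \in top (upd (fun _ => mkpref w w) i (mkpref t w) j)] = set0.
    by apply/negbTE.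
  by apply/setP => h; rewrite !inE top_upd !top_mk; case: ifP.
Qed.

Lemma excl (W : K -> {set {set 'I_n}}) (i : 'I_n) (t' w : {set K}) (Q : pref K) (P : profile K n) :
  committees W -> top Q = t' ->
  (exists l, (l \in t' /\ [set i] \in W l /\ l \notin w) \/
             (l \notin t' /\ [set~ i] \notin W l /\ l \in w)) ->
  vbc W (upd P i Q) != w.
Proof.
move=> cW tQ [l [[lt [Wl lw]]|[lt [Wl lw]]]]; apply/negP => /eqP e;
  case: (cW l) => _ [n0 up].
- case/negP: lw; rewrite -e inE; apply: up Wl _.
  by apply/subsetP => h; rewrite !inE => /eqP ->; rewrite top_upd eqxx tQ.
- move: lw; rewrite -e inE => C; case/negP: Wl; apply: up C _.
  apply/subsetP => h; rewrite !inE top_upd; case: (h =P i) => // _.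
  by rewrite tQ (negbTE lt).
Qed.

Lemma full (W : K -> {set {set 'I_n}}) (i : 'I_n) (Q : pref K) (x : {set K}) : committees W ->
  (forall l, [set i] \notin W l /\ [set~ i] \in W l) ->
  vbc W (upd (fun _ => mkpref x x) i Q) = x.
Proof.
move=> cW H; apply/setP => l; rewrite inE.
have [H1 H2] := H l; case: (cW l) => _ [n0 up].
case Hx: (l \in x).
- apply: up H2 _; apply/subsetP => h; rewrite !inE top_upd.
  by case: (h =P i) => // _; rewrite top_mk.
- apply/negP => C; case/negP: H1; apply: up C _.
  apply/subsetP => h; rewrite !inE top_upd; case: (h =P i) => // _.
  by rewrite top_mk Hx.
Qed.

Lemma dict (W : K -> {set {set 'I_n}}) (i : 'I_n) : committees W ->
  (forall l, [set i] \in W l /\ [set~ i] \notin W l) -> dictatorial (vbc W).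
Proof.
move=> cW H; exists i => P; apply/setP => l; rewrite inE.
have [H1 H2] := H l; case: (cW l) => _ [n0 up].
case Hx: (l \in top (P i)).
- by apply: up H1 _; apply/subsetP => h; rewrite !inE => /eqP ->.
- apply/negP => C; case/negP: H2; apply: up C _.
  by apply/subsetP => h; rewrite !inE; apply: contraTneq => ->; rewrite Hx.
Qed.

Lemma manip (W : K -> {set {set 'I_n}}) (i : 'I_n) (t t' w : {set K}) : committees W -> w != t ->
  (forall l, (l \in w -> l \notin t -> [set~ i] \in W l) /\
             (l \notin w -> l \in t -> [set i] \notin W l)) ->
  (exists l, (l \in t' /\ [set i] \in W l /\ l \notin w) \/
             (l \notin t' /\ [set~ i] \notin W l /\ l \in w)) ->
  obvious_manipulation (vbc W) i (mkpref t w) (mkpref t' t').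
Proof.
move=> cW wt Hm He.
have tw : t != w by rewrite eq_sym.
have ex : forall P : profile K n, vbc W (upd P i (mkpref t' t')) != w.
  by move=> P; apply: excl He => //; rewrite top_mk.
split.
  exists (fun _ => mkpref w w); rewrite (memb cW Hm).
  by apply: bot_mk.
left.
have [w' Hw'] := @exists_worst (mkpref t w)
   (option_set (vbc W) i (mkpref t' t')) _ (ex_intro _ (fun _ => mkpref w w) erefl).
exists w, w'; split; last split => //.
  split; first by exists (fun _ => mkpref w w); rewrite (memb cW Hm).
  by move=> y _ yw; apply: bot_mk.
case: Hw' => [[P <-] _]; apply: bot_mk => //; exact: ex.
Qed.
End S.

Ltac mfin := let l := fresh "l" in move=> l; rewrite !inE; split;
  (case: (l =P _) => [->|/eqP ?]); try (case: (l =P _) => [->|/eqP ?]);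
  rewrite ?eqxx ?orbT ?orbF //=; try (by rewrite eq_sym);
  try (by move=> *; rewrite ?eqxx ?orbT ?orbF /=; eauto);
  try (by move=> *; first [assumption | apply/negbT; assumption]).

Theorem theorem4 (K : finType) (n : nat) (W : K -> {set {set 'I_n}}) :
  2 <= #|K| -> 2 <= n -> committees W -> ~ dictatorial (vbc W) ->
  (NOM (vbc W) <->
   forall k : K, (\bigcap_(M in W k) M = set0) /\
                 (forall M, M \in W k -> 2 <= #|M|)).
Proof.
move=> K2 n2 cW nd; split.
  move=> nom.
  have good : forall i k0, [set i] \notin W k0 /\ [set~ i] \in W k0.
    move=> i k0; apply: NNPP => Hbad.
    have Hp : ([set i] \in W k0) || ([set~ i] \notin W k0).
      case: ([set i] \in W k0) Hbad => //=; case: ([set~ i] \in W k0) => //= h; exfalso; exact: h.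
    have [j0 Hj0] : exists j0, ~~ (([set i] \in W j0) && ([set~ i] \notin W j0)).
      case: (boolP [forall l, ([set i] \in W l) && ([set~ i] \notin W l)]) =>
        [/forallP A | /forallPn //].
      by exfalso; apply: nd; apply: (dict (i:=i) cW) => l; move/andP: (A l).
    case: (boolP [exists j, (j != k0) && ~~ (([set i] \in W j) && ([set~ i] \notin W j))])
      => [/existsP [j /andP [jk Hj]] | /existsPn Hall].
      case HYk: ([set i] \in W k0); case HYj: ([set i] \in W j);
        move: Hj Hp; rewrite HYk HYj /= ?negbK => Hj Hp.
      - apply: (nom i (mkpref set0 [set j]) (mkpref [set k0] [set k0])).
        apply: manip => //.
        + by apply/eqP => /setP /(_ j); rewrite !inE eqxx.
        + mfin.
        + by exists k0; left; rewrite !inE eqxx eq_sym jk.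
      - apply: (nom i (mkpref [set j] set0) (mkpref [set j; k0] [set j; k0])).
        apply: manip => //.
        + by apply/eqP => /setP /(_ j); rewrite !inE eqxx.
        + mfin.
        + by exists k0; left; rewrite !inE eqxx orbT.
      - apply: (nom i (mkpref [set k0] [set k0; j]) (mkpref set0 set0)).
        apply: manip => //.
        + by apply/eqP => /setP /(_ j); rewrite !inE eqxx orbT (negbTE jk).
        + mfin.
        + by exists k0; right; rewrite !inE eqxx.
      - apply: (nom i (mkpref [set k0; j] [set k0]) (mkpref [set j] [set j])).
        apply: manip => //.
        + by apply/eqP => /setP /(_ j); rewrite !inE eqxx orbT (negbTE jk).
        + mfin.
        + by exists k0; right; rewrite !inE eqxx eq_sym jk.
    have [j jk] : exists j, j != k0.
      case: (boolP [exists j, j != k0]) => [/existsP // | /existsPn A].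
      have : [set: K] \subset [set k0].
        by apply/subsetP => x _; rewrite inE; have := A x; rewrite negbK.
      by move/subset_leq_card; rewrite cardsT cards1 leqNgt K2.
    have := Hall j; rewrite jk /= negbK => /andP [Yj Vj].
    have j0k : j0 = k0.
      by apply/eqP; apply: contraT => jk'; have := Hall j0; rewrite jk' Hj0.
    subst j0.
    case HYk: ([set i] \in W k0); move: Hj0 Hp; rewrite HYk /= ?negbK => Hj0 Hp.
    - apply: (nom i (mkpref set0 [set k0]) (mkpref [set j] [set j])).
      apply: manip => //.
      + by apply/eqP => /setP /(_ k0); rewrite !inE eqxx.
      + mfin.
      + by exists j; left; rewrite !inE eqxx jk.
    - apply: (nom i (mkpref [set k0] set0) (mkpref [set k0; j] [set k0; j])).
      apply: manip => //.
      + by apply/eqP => /setP /(_ k0); rewrite !inE eqxx.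
      + mfin.
      + by exists j; left; rewrite !inE eqxx orbT.
  move=> k; split.
    apply/setP => i; rewrite inE; apply/bigcapP => H.
    by have := H _ (good i k).2; rewrite !inE eqxx.
  move=> M MW; rewrite leqNgt; apply/negP; rewrite ltnS leq_eqVlt ltnS leqn0.
  case/orP.
    by case/cards1P => i Mi; move: MW; rewrite Mi (negbTE (good i k).1).
  by rewrite cards_eq0 => /eqP M0; case: (cW k) => _ [+ _]; rewrite -M0 MW.
move=> H i Pi Pi' [_ HO].
have good : forall l, [set i] \notin W l /\ [set~ i] \in W l.
  move=> l; have [H1 H2] := H l; split.
    by apply/negP => /H2; rewrite cards1.
  have F : i \in \bigcap_(M in W l) M -> False by rewrite H1 inE.
  apply: NNPP => C; apply: F; apply/bigcapP => M MW; apply: contraT => iM.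
  case: C; case: (cW l) => _ [_ up]; apply: up MW _.
  by apply/subsetP => x xM; rewrite !inE; apply/eqP => e; subst; rewrite xM in iM.
have fullO : forall Q x, option_set (vbc W) i Q x.
  by move=> Q x; exists (fun _ => mkpref x x); exact: full.
case: (proj2_sig Pi) => irr [tr _].
case: HO => [[w [w' [[_ Hw] [[_ Hw'] R]]]]|[b [b' [[_ Hb] [_ R]]]]].
  have ww' : w != w' by apply: contraTneq R => ->; rewrite /prefR irr.
  by have := tr _ _ _ (Hw' _ (fullO _ _) ww') R; rewrite /prefR irr.
have bb' : b' != b by apply: contraTneq R => ->; rewrite /prefR irr.
by have := tr _ _ _ (Hb _ (fullO _ _) bb') R; rewrite /prefR irr.
Qed.
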